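(* Let $f(t)=\sum_{k=0}^n a_kt^k$ with $a_k\in\mathbb{H}$ be a left quaternion polynomial. Then $|J(f)(c)|\ge0$ for every $c\in\mathbb{H}$.
   Context: $\mathbb{H}$ is the real quaternion algebra, identified with $\mathbb{R}^4$ via $x+\mathbf{i}y+\mathbf{j}z+\mathbf{k}w\mapsto(x,y,z,w)$. A left polynomial $f(t)=\sum a_kt^k$ is evaluated at $c\in\mathbb{H}$ as $\sum a_kc^k$ and viewed as a map $\mathbb{R}^4\to\mathbb{R}^4$ via $f=f_1+\mathbf{i}f_2+\mathbf{j}f_3+\mathbf{k}f_4\mapsto(f_1,f_2,f_3,f_4)$; $J(f)(c)=[\partial f_i/\partial x_j](c)$ with $(x_1,\dots,x_4)=(x,y,z,w)$, and $|J(f)(c)|$ is its determinant. *)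

(* Defs.v *)
From Stdlib Require Import Reals List.
Open Scope R_scope.

(* Real quaternions x + i y + j z + k w, identified with (x,y,z,w) in R^4. *)
Record quat : Type := Quat { qx : R; qy : R; qz : R; qw : R }.

Definition qadd (a b : quat) : quat :=
  Quat (qx a + qx b) (qy a + qy b) (qz a + qz b) (qw a + qw b).

Definition qmul (a b : quat) : quat :=
  Quat (qx a * qx b - qy a * qy b - qz a * qz b - qw a * qw b)
       (qx a * qy b + qy a * qx b + qz a * qw b - qw a * qz b)
       (qx a * qz b - qy a * qw b + qz a * qx b + qw a * qy b)
       (qx a * qw b + qy a * qz b - qz a * qy b + qw a * qx b).

Definition qzero : quat := Quat 0 0 0 0.
Definition qone  : quat := Quat 1 0 0 0.

Fixpoint qpow (c : quat) (n : nat) : quat :=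
  match n with O => qone | S m => qmul (qpow c m) c end.

Definition qscale (t : R) (a : quat) : quat :=
  Quat (t * qx a) (t * qy a) (t * qz a) (t * qw a).

(* A left polynomial f(t) = sum_{k=0}^n a_k t^k is given by its coefficient
   list [a_0; a_1; ...; a_n]; it is evaluated at c as sum_k a_k c^k. *)
Fixpoint lpoly_eval_from (l : list quat) (k : nat) (c : quat) : quat :=
  match l with
  | nil => qzero
  | a :: l' => qadd (qmul a (qpow c k)) (lpoly_eval_from l' (S k) c)
  end.
Definition lpoly_eval (l : list quat) (c : quat) : quat := lpoly_eval_from l 0 c.

(* i-th real coordinate (i = 0..3 : x,y,z,w) *)
Definition qcomp (i : nat) (a : quat) : R :=
  match i with 0 => qx a | 1 => qy a | 2 => qz a | _ => qw a end.

Definition qbasis (j : nat) : quat :=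
  match j with
  | 0 => Quat 1 0 0 0 | 1 => Quat 0 1 0 0 | 2 => Quat 0 0 1 0 | _ => Quat 0 0 0 1
  end.

Definition is_partial (l : list quat) (c : quat) (i j : nat) (d : R) : Prop :=
  derivable_pt_lim (fun t => qcomp i (lpoly_eval l (qadd c (qscale t (qbasis j))))) 0 d.

Definition det3 (a b c d e f g h i : R) : R :=
  a * (e * i - f * h) - b * (d * i - f * g) + c * (d * h - e * g).

Definition det4 (M : nat -> nat -> R) : R :=
    M 0%nat 0%nat * det3 (M 1%nat 1%nat) (M 1%nat 2%nat) (M 1%nat 3%nat)
                         (M 2%nat 1%nat) (M 2%nat 2%nat) (M 2%nat 3%nat)
                         (M 3%nat 1%nat) (M 3%nat 2%nat) (M 3%nat 3%nat)
  - M 0%nat 1%nat * det3 (M 1%nat 0%nat) (M 1%nat 2%nat) (M 1%nat 3%nat)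
                         (M 2%nat 0%nat) (M 2%nat 2%nat) (M 2%nat 3%nat)
                         (M 3%nat 0%nat) (M 3%nat 2%nat) (M 3%nat 3%nat)
  + M 0%nat 2%nat * det3 (M 1%nat 0%nat) (M 1%nat 1%nat) (M 1%nat 3%nat)
                         (M 2%nat 0%nat) (M 2%nat 1%nat) (M 2%nat 3%nat)
                         (M 3%nat 0%nat) (M 3%nat 1%nat) (M 3%nat 3%nat)
  - M 0%nat 3%nat * det3 (M 1%nat 0%nat) (M 1%nat 1%nat) (M 1%nat 2%nat)
                         (M 2%nat 0%nat) (M 2%nat 1%nat) (M 2%nat 2%nat)
                         (M 3%nat 0%nat) (M 3%nat 1%nat) (M 3%nat 2%nat).

(* Main.v *)
Require Import Defs.
From Stdlib Require Import Reals List Lra Lia Psatz.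
Open Scope R_scope.
Definition vpart (c : quat) := Quat 0 (qy c) (qz c) (qw c).
Definition nrm (c : quat) := qy c * qy c + qz c * qz c + qw c * qw c.
Definition nsq (a : quat) := qx a * qx a + qy a * qy a + qz a * qz a + qw a * qw a.
Definition qsub (a b : quat) := qadd a (qscale (-1) b).
Definition qconj (a : quat) := Quat (qx a) (- qy a) (- qz a) (- qw a).
Definition pr1 (c h : quat) := qsub (qscale (nrm c) h) (qmul (qmul (vpart c) h) (vpart c)).
Definition pr2 (c h : quat) := qadd (qscale (nrm c) h) (qmul (qmul (vpart c) h) (vpart c)).
Definition mat_of (F : quat -> quat) : nat -> nat -> R := fun i j => qcomp i (F (qbasis j)).
Definition M1f (S E v : quat) := fun h => qsub (qmul S (qmul h (vpart v))) (qmul E h).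
Definition mmul (X Y : nat -> nat -> R) : nat -> nat -> R := fun i j =>
  X i 0%nat * Y 0%nat j + X i 1%nat * Y 1%nat j + X i 2%nat * Y 2%nat j + X i 3%nat * Y 3%nat j.

Lemma det4_mul X Y : det4 (mmul X Y) = det4 X * det4 Y.
Proof. unfold det4, det3, mmul. ring. Qed.

Lemma det4_ext (J M : nat -> nat -> R) :
  (forall i j, (i < 4)%nat -> (j < 4)%nat -> J i j = M i j) -> det4 J = det4 M.
Proof. intro H. unfold det4, det3. repeat rewrite H by lia. reflexivity. Qed.

Lemma det4_scale s M : det4 (fun i j => s * M i j) = s^4 * det4 M.
Proof. unfold det4, det3. ring. Qed.

Ltac qexpand := repeat match goal with q : quat |- _ => destruct q end;
  cbv beta iota zeta delta [det4 det3 mat_of mmul M1f pr1 pr2 qsub qconj nsq nrm vpart qadd qmul qscale qbasis qcomp qx qy qz qw] in *.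

Lemma det_L P : det4 (mat_of (fun h => qmul P h)) = (nsq P)^2.
Proof. qexpand. ring. Qed.

Lemma det_R v : det4 (mat_of (fun h => qmul h (vpart v))) = (nrm v)^2.
Proof. qexpand. ring. Qed.

Lemma det_M2 s F v : det4 (mat_of (fun h => qsub (qscale s (qmul h (vpart v))) (qmul F h))) =
  (qx F * qx F + (qy F * qy F + qz F * qz F + qw F * qw F) + s * s * nrm v)^2
   - 4 * (qy F * qy F + qz F * qz F + qw F * qw F) * (s * s * nrm v).
Proof. qexpand. ring. Qed.

Lemma det_M2_nonneg s F v : 0 <= det4 (mat_of (fun h => qsub (qscale s (qmul h (vpart v))) (qmul F h))).
Proof.
  rewrite det_M2.
  set (a := qy F * qy F + qz F * qz F + qw F * qw F).
  set (b := s * s * nrm v).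
  assert (0 <= a) by (unfold a; nra).
  assert (0 <= b) by (unfold b, nrm; nra).
  assert (0 <= qx F * qx F) by nra.
  set (x := qx F * qx F) in *.
  replace ((x + a + b)^2 - 4 * a * b) with (x * (x + 2*a + 2*b) + (a - b)^2) by ring.
  assert (0 <= x * (x + 2*a + 2*b)) by (apply Rmult_le_pos; lra).
  assert (0 <= (a-b)^2) by (apply pow2_ge_0). lra.
Qed.



Ltac idx := match goal with
  | i : nat |- _ => destruct i as [|[|[|[|i]]]]; [ | | | | exfalso; lia ]
  end.

Lemma fac1 A B c : forall i j, (i < 4)%nat -> (j < 4)%nat ->
  mmul (mat_of (fun h => qadd (qmul A (pr1 c h)) (qmul B (pr2 c h)))) (mat_of (fun h => qmul h (vpart c))) i j
  = nrm c * mat_of (M1f (qadd A B) (qmul (qsub B A) (vpart c)) c) i j.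
Proof. intros i j Hi Hj. unfold M1f. idx; idx; qexpand; ring. Qed.

Lemma fac2 S E v : forall i j, (i < 4)%nat -> (j < 4)%nat ->
  mmul (mat_of (fun h => qmul (qconj S) h)) (mat_of (M1f S E v)) i j
  = mat_of (fun h => qsub (qscale (nsq S) (qmul h (vpart v))) (qmul (qmul (qconj S) E) h)) i j.
Proof. intros i j Hi Hj. unfold M1f. idx; idx; qexpand; ring. Qed.

Lemma nsq_conj S : nsq (qconj S) = nsq S.
Proof. qexpand. ring. Qed.

Lemma det_M1_S0 S E v : nsq S = 0 -> det4 (mat_of (M1f S E v)) = (nsq E)^2.
Proof.
  destruct S as [s0 s1 s2 s3]. unfold nsq; simpl. intro H.
  assert (s0 = 0) by nra. assert (s1 = 0) by nra. assert (s2 = 0) by nra. assert (s3 = 0) by nra.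
  subst. unfold M1f. qexpand. ring.
Qed.

Lemma nsq_ge0 a : 0 <= nsq a.
Proof. unfold nsq. nra. Qed.

Lemma T_nonneg A B c : 0 < nrm c ->
  0 <= det4 (mat_of (fun h => qadd (qmul A (pr1 c h)) (qmul B (pr2 c h)))).
Proof.
  intro HN.
  set (S := qadd A B). set (E := qmul (qsub B A) (vpart c)).
  assert (h1 : det4 (mat_of (fun h => qadd (qmul A (pr1 c h)) (qmul B (pr2 c h)))) * (nrm c)^2
              = (nrm c)^4 * det4 (mat_of (M1f S E c))).
  { rewrite <- det_R, <- det4_mul, (det4_ext _ _ (fac1 A B c)). apply det4_scale. }
  assert (h2 : (nsq S)^2 * det4 (mat_of (M1f S E c)) >= 0).
  { rewrite <- nsq_conj, <- det_L, <- det4_mul, (det4_ext _ _ (fac2 S E c)).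
    apply Rle_ge, det_M2_nonneg. }
  assert (h3 : 0 <= det4 (mat_of (M1f S E c))).
  { destruct (Req_dec (nsq S) 0) as [H0|H0].
    - rewrite det_M1_S0 by exact H0. apply pow2_ge_0.
    - pose proof (nsq_ge0 S).
      assert (0 < (nsq S)^2) by (apply pow_lt; lra). nra. }
  assert (0 < (nrm c)^2) by (apply pow_lt; lra).
  assert (0 < (nrm c)^4) by (apply pow_lt; lra).
  nra.
Qed.

Fixpoint Dpow (c h : quat) (k : nat) : quat :=
  match k with O => qzero | S m => qadd (qmul (Dpow c h m) c) (qmul (qpow c m) h) end.
Fixpoint Dfrom (l : list quat) (k : nat) (c h : quat) : quat :=
  match l with nil => qzero | a :: l' => qadd (qmul a (Dpow c h k)) (Dfrom l' (S k) c h) end.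

Definition qdl (F : R -> quat) (p : quat) : Prop :=
  derivable_pt_lim (fun t => qx (F t)) 0 (qx p) /\
  derivable_pt_lim (fun t => qy (F t)) 0 (qy p) /\
  derivable_pt_lim (fun t => qz (F t)) 0 (qz p) /\
  derivable_pt_lim (fun t => qw (F t)) 0 (qw p).

Lemma dl_plus f g a b : derivable_pt_lim f 0 a -> derivable_pt_lim g 0 b ->
  derivable_pt_lim (fun t => f t + g t) 0 (a + b).
Proof. intros; now apply derivable_pt_lim_plus. Qed.
Lemma dl_minus f g a b : derivable_pt_lim f 0 a -> derivable_pt_lim g 0 b ->
  derivable_pt_lim (fun t => f t - g t) 0 (a - b).
Proof. intros; now apply derivable_pt_lim_minus. Qed.
Lemma dl_mult f g a b : derivable_pt_lim f 0 a -> derivable_pt_lim g 0 b ->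
  derivable_pt_lim (fun t => f t * g t) 0 (a * g 0 + f 0 * b).
Proof. intros; now apply derivable_pt_lim_mult. Qed.
Lemma dl_val f l l' : derivable_pt_lim f 0 l -> l = l' -> derivable_pt_lim f 0 l'.
Proof. intros H ->; exact H. Qed.

Lemma qdl_ext F p q : qdl F p -> p = q -> qdl F q.
Proof. intros H ->; exact H. Qed.

Ltac dsolve := repeat (apply dl_minus || apply dl_plus || apply dl_mult); eassumption.

Lemma qdl_add F G p q : qdl F p -> qdl G q -> qdl (fun t => qadd (F t) (G t)) (qadd p q).
Proof.
  intros (H1&H2&H3&H4) (G1&G2&G3&G4). repeat split; simpl; apply dl_plus; assumption.
Qed.

Lemma qdl_mul F G p q : qdl F p -> qdl G q ->
  qdl (fun t => qmul (F t) (G t)) (qadd (qmul p (G 0)) (qmul (F 0) q)).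
Proof.
  intros (H1&H2&H3&H4) (G1&G2&G3&G4). repeat split; simpl;
  (eapply dl_val; [ repeat (apply dl_minus || apply dl_plus || apply dl_mult); eassumption | cbv beta; ring ]).
Qed.

Lemma qdl_const a : qdl (fun _ => a) qzero.
Proof. repeat split; apply derivable_pt_lim_const. Qed.

Lemma qdl_line c e : qdl (fun t => qadd c (qscale t e)) e.
Proof.
  repeat split; simpl; (eapply dl_val;
    [ apply dl_plus; [apply derivable_pt_lim_const | apply dl_mult; [apply derivable_pt_lim_id | apply derivable_pt_lim_const]] | cbv beta; ring ]).
Qed.

Lemma line0 c e : qadd c (qscale 0 e) = c.
Proof. destruct c, e; unfold qadd, qscale; simpl; f_equal; ring. Qed.

Lemma qdl_pow c e k : qdl (fun t => qpow (qadd c (qscale t e)) k) (Dpow c e k).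
Proof.
  induction k as [|k IH].
  - simpl. apply qdl_const.
  - simpl. eapply qdl_ext. apply (qdl_mul _ _ _ _ IH (qdl_line c e)).
    rewrite line0. reflexivity.
Qed.

Lemma qzl a X Y : qadd (qmul qzero X) (qmul a Y) = qmul a Y.
Proof. unfold qzero. qexpand. f_equal; ring. Qed.

Lemma qdl_from c e l : forall k,
  qdl (fun t => lpoly_eval_from l k (qadd c (qscale t e))) (Dfrom l k c e).
Proof.
  induction l as [|a l IH]; intro k.
  - simpl. apply qdl_const.
  - simpl. apply qdl_add; [| apply IH].
    eapply qdl_ext. apply (qdl_mul _ _ _ _ (qdl_const a) (qdl_pow c e k)).
    cbv beta. apply qzl.
Qed.

Lemma partial_ok l c i j : (i < 4)%nat ->
  is_partial l c i j (qcomp i (Dfrom l 0 c (qbasis j))).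
Proof.
  intro Hi. destruct (qdl_from c (qbasis j) l 0) as (H1&H2&H3&H4).
  unfold is_partial, lpoly_eval.
  destruct i as [|[|[|[|i]]]]; cbv beta iota delta [qcomp]; try eassumption; lia.
Qed.

Lemma step_id D P Q c K h :
  qscale (2 * nrm c) D = qadd (qmul P (pr1 c h)) (qmul Q (pr2 c h)) ->
  qscale (2 * nrm c) (qadd (qmul D c) (qmul K h)) =
  qadd (qmul (qadd (qmul P c) K) (pr1 c h)) (qmul (qadd (qmul Q (qconj c)) K) (pr2 c h)).
Proof.
  intro H.
  transitivity (qadd (qmul (qscale (2 * nrm c) D) c) (qmul K (qscale (2 * nrm c) h))).
  { clear H. qexpand. f_equal; ring. }
  rewrite H. clear H. qexpand. f_equal; ring.
Qed.

Lemma pow_struct c k : exists P Q, forall h,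
  qscale (2 * nrm c) (Dpow c h k) = qadd (qmul P (pr1 c h)) (qmul Q (pr2 c h)).
Proof.
  induction k as [|k IH].
  - exists qzero, qzero. intro h. simpl. unfold qzero. qexpand. f_equal; ring.
  - destruct IH as (P & Q & H).
    exists (qadd (qmul P c) (qpow c k)), (qadd (qmul Q (qconj c)) (qpow c k)).
    intro h. simpl. apply step_id, H.
Qed.

Lemma cons_id a D1 D2 P Q A B h1 h2 s :
  qscale s D1 = qadd (qmul P h1) (qmul Q h2) ->
  qscale s D2 = qadd (qmul A h1) (qmul B h2) ->
  qscale s (qadd (qmul a D1) D2) =
  qadd (qmul (qadd (qmul a P) A) h1) (qmul (qadd (qmul a Q) B) h2).
Proof.
  intros H1 H2.
  transitivity (qadd (qmul a (qscale s D1)) (qscale s D2)).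
  { clear H1 H2. qexpand. f_equal; ring. }
  rewrite H1, H2. clear H1 H2. qexpand. f_equal; ring.
Qed.

Lemma from_struct c l : forall k, exists A B, forall h,
  qscale (2 * nrm c) (Dfrom l k c h) = qadd (qmul A (pr1 c h)) (qmul B (pr2 c h)).
Proof.
  induction l as [|a l IH]; intro k.
  - exists qzero, qzero. intro h. simpl. unfold qzero. qexpand. f_equal; ring.
  - destruct (pow_struct c k) as (P & Q & HP).
    destruct (IH (S k)) as (A & B & HA).
    exists (qadd (qmul a P) A), (qadd (qmul a Q) B).
    intro h. simpl. apply cons_id; auto.
Qed.

Lemma step0 D P x K h :
  D = qmul P h ->
  qadd (qmul D (Quat x 0 0 0)) (qmul K h) = qmul (qadd (qmul P (Quat x 0 0 0)) K) h.
Proof. intros ->. qexpand. f_equal; ring. Qed.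

Lemma pow_struct0 x k : exists P, forall h, Dpow (Quat x 0 0 0) h k = qmul P h.
Proof.
  induction k as [|k IH].
  - exists qzero. intro h. simpl. unfold qzero. qexpand. f_equal; ring.
  - destruct IH as (P & H).
    exists (qadd (qmul P (Quat x 0 0 0)) (qpow (Quat x 0 0 0) k)).
    intro h. simpl. apply step0, H.
Qed.

Lemma cons0 a D1 D2 P A h : D1 = qmul P h -> D2 = qmul A h ->
  qadd (qmul a D1) D2 = qmul (qadd (qmul a P) A) h.
Proof. intros -> ->. qexpand. f_equal; ring. Qed.

Lemma from_struct0 x l : forall k, exists A, forall h, Dfrom l k (Quat x 0 0 0) h = qmul A h.
Proof.
  induction l as [|a l IH]; intro k.
  - exists qzero. intro h. simpl. unfold qzero. qexpand. f_equal; ring.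
  - destruct (pow_struct0 x k) as (P & HP).
    destruct (IH (S k)) as (A & HA).
    exists (qadd (qmul a P) A). intro h. simpl. apply cons0; auto.
Qed.

Lemma qcomp_scale s X i : (i < 4)%nat -> qcomp i (qscale s X) = s * qcomp i X.
Proof. intro Hi. destruct i as [|[|[|[|i]]]]; simpl; try reflexivity; lia. Qed.

Lemma nrm_ge0 c : 0 <= nrm c.
Proof. unfold nrm. nra. Qed.

Theorem mainTheorem9 (l : list quat) (c : quat) :
  (exists J : nat -> nat -> R,
      forall i j : nat, (i < 4)%nat -> (j < 4)%nat -> is_partial l c i j (J i j)) /\
  (forall J : nat -> nat -> R,
      (forall i j : nat, (i < 4)%nat -> (j < 4)%nat -> is_partial l c i j (J i j)) ->
      0 <= det4 J).
Proof.
  set (M := fun i j => qcomp i (Dfrom l 0 c (qbasis j))).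
  assert (HM : forall i j, (i < 4)%nat -> (j < 4)%nat -> is_partial l c i j (M i j)).
  { intros i j Hi Hj. apply partial_ok, Hi. }
  split.
  - exists M. exact HM.
  - intros J HJ.
    rewrite (det4_ext J M).
    2:{ intros i j Hi Hj. eapply uniqueness_limite; [apply HJ | apply HM]; assumption. }
    destruct (Req_dec (nrm c) 0) as [H0|H0].
    + destruct c as [x y z w]. unfold nrm in H0; simpl in H0.
      assert (y = 0) by nra. assert (z = 0) by nra. assert (w = 0) by nra. subst.
      destruct (from_struct0 x l 0) as (A & HA).
      rewrite (det4_ext M (mat_of (fun h => qmul A h))).
      2:{ intros i j _ _. unfold M, mat_of. rewrite HA. reflexivity. }
      rewrite det_L. apply pow2_ge_0.
    + assert (Hp : 0 < nrm c) by (pose proof (nrm_ge0 c); lra).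
      destruct (from_struct c l 0) as (A & B & HA).
      pose proof (T_nonneg A B c Hp) as HT.
      rewrite (det4_ext (mat_of _) (fun i j => (2 * nrm c) * M i j)) in HT.
      2:{ intros i j Hi _. unfold M, mat_of. rewrite <- HA. apply qcomp_scale, Hi. }
      rewrite det4_scale in HT.
      assert (0 < (2 * nrm c)^4) by (apply pow_lt; lra).
      nra.
Qed.
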